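(* Let $l,l'$ be lines intersecting at a point $O$, and let $X,X'$ be two points lying in the same quadrant into which $l,l'$ divide the plane. Let $M$ be the midpoint of $X,X'$, let $Y$ be the intersection of $l$ with the reflection of $l'$ about $M$, and let $Y'$ be the intersection of $l'$ with the reflection of $l$ about $M$, so that $XYX'Y'$ is a (possibly degenerate) parallelogram. Let $\triangle OYY'$ denote the closed triangle (including its boundary). Then: (1) if $\mathrm{disprod}_{l,l'}(X)<\mathrm{disprod}_{l,l'}(X')$, then $X\in\triangle OYY'$ and $X'\notin\triangle OYY'$; (2) if $\mathrm{disprod}_{l,l'}(X)>\mathrm{disprod}_{l,l'}(X')$, then $X\notin\triangle OYY'$ and $X'\in\triangle OYY'$; (3) if $\mathrm{disprod}_{l,l'}(X)=\mathrm{disprod}_{l,l'}(X')$, then $XYX'Y'$ is degenerate, i.e. its four corners lie on a common line.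
   Context: $d_l(X)$ denotes the distance from the point $X$ to the line $l$, and $\mathrm{disprod}_{l,l'}(X)=d_l(X)\cdot d_{l'}(X)$. *)

(* Defs.v *)
From HB Require Import structures.
From mathcomp Require Import all_boot all_order all_algebra.
From mathcomp Require Import boolp classical_sets reals.
Set Implicit Arguments. Unset Strict Implicit. Unset Printing Implicit Defensive.
Import Order.TTheory GRing.Theory Num.Theory.
Local Open Scope ring_scope.
Local Open Scope classical_set_scope.

Section Plane.
Variable R : realType.

Definition pt := (R * R)%type.

Definition padd (p q : pt) : pt := (p.1 + q.1, p.2 + q.2).
Definition pscale (t : R) (p : pt) : pt := (t * p.1, t * p.2).

Definition dist (p q : pt) : R :=
  Num.sqrt ((p.1 - q.1) ^+ 2 + (p.2 - q.2) ^+ 2).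

Definition line_through (P u : pt) : set pt :=
  [set Z | exists t : R, Z = padd P (pscale t u)].

Definition is_line (L : set pt) : Prop :=
  exists P u : pt, u != (0, 0) /\ L = line_through P u.

Definition dist_line (L : set pt) (X : pt) : R :=
  inf [set dist X Z | Z in L].

Definition disprod (l l' : set pt) (X : pt) : R :=
  dist_line l X * dist_line l' X.

Definition segment (X Y : pt) : set pt :=
  [set Z | exists t : R, 0 <= t <= 1 /\ Z = padd (pscale (1 - t) X) (pscale t Y)].

Definition same_side (L : set pt) (X Y : pt) : Prop :=
  ~ L X /\ ~ L Y /\ segment X Y `&` L = set0.

Definition same_quadrant (l l' : set pt) (X Y : pt) : Prop :=
  same_side l X Y /\ same_side l' X Y.

Definition midpoint (X Y : pt) : pt := ((X.1 + Y.1) / 2, (X.2 + Y.2) / 2).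

Definition reflect_pt (M Z : pt) : pt := (2 * M.1 - Z.1, 2 * M.2 - Z.2).

Definition reflect_set (M : pt) (L : set pt) : set pt := reflect_pt M @` L.

Definition triangle (A B C : pt) : set pt :=
  [set Z | exists a b c : R, [/\ 0 <= a, 0 <= b, 0 <= c, a + b + c = 1 &
     Z = padd (padd (pscale a A) (pscale b B)) (pscale c C)]].

Definition collinear4 (A B C D : pt) : Prop :=
  exists L : set pt, is_line L /\ L A /\ L B /\ L C /\ L D.

End Plane.

(* Main.v *)
Require Import Defs.
From HB Require Import structures.
From mathcomp Require Import all_boot all_order all_algebra.
From mathcomp Require Import boolp classical_sets reals.
From mathcomp Require Import ring lra.
Set Implicit Arguments. Unset Strict Implicit.
Import Order.TTheory GRing.Theory Num.Theory.
Local Open Scope ring_scope.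
Local Open Scope classical_set_scope.

Section H.
Variable R : realType.
Implicit Types P u Z W : pt R.

Definition cr P u Z : R := (Z.1 - P.1) * u.2 - (Z.2 - P.2) * u.1.

Lemma nz_norm u : u != (0,0) -> 0 < u.1 ^+ 2 + u.2 ^+ 2.
Proof.
case: u => a b /= H.
have : (a != 0) || (b != 0).
  case: (eqVneq a 0) => Ha //=; case: (eqVneq b 0) => Hb //=; move: H; by rewrite Ha Hb eqxx.
case/orP => H1.
  have := sqr_ge0 b; have : 0 < a ^+ 2 by rewrite exprn_even_gt0. lra.
have := sqr_ge0 a; have : 0 < b ^+ 2 by rewrite exprn_even_gt0. lra.
Qed.

Lemma on_line P u Z : u != (0,0) -> line_through P u Z <-> cr P u Z = 0.
Proof.
move=> Hu; have Hn := nz_norm Hu; split.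
  case=> t ->; rewrite /cr /padd /pscale /=; ring.
move=> H; exists (((Z.1 - P.1) * u.1 + (Z.2 - P.2) * u.2) / (u.1 ^+ 2 + u.2 ^+ 2)).
move: H; rewrite /cr /padd /pscale; case: Z P u Hn {Hu} => z1 z2 [p1 p2] [u1 u2] /= Hn H.
have Hn0 : u1 ^+ 2 + u2 ^+ 2 != 0 by rewrite gt_eqF.
set k := (_ + _) / _.
have Ek : (u1 ^+ 2 + u2 ^+ 2) * k = (z1 - p1) * u1 + (z2 - p2) * u2.
  by rewrite /k mulrC divfK.
congr pair; apply: (mulfI Hn0); rewrite mulrDr mulrA Ek.
  apply/eqP; rewrite -subr_eq0; apply/eqP.
  have -> : (u1 ^+ 2 + u2 ^+ 2) * z1 - ((u1 ^+ 2 + u2 ^+ 2) * p1 + ((z1 - p1) * u1 + (z2 - p2) * u2) * u1) = u2 * ((z1 - p1) * u2 - (z2 - p2) * u1) by ring.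
  by rewrite H mulr0.
apply/eqP; rewrite -subr_eq0; apply/eqP.
have -> : (u1 ^+ 2 + u2 ^+ 2) * z2 - ((u1 ^+ 2 + u2 ^+ 2) * p2 + ((z1 - p1) * u1 + (z2 - p2) * u2) * u2) = - u1 * ((z1 - p1) * u2 - (z2 - p2) * u1) by ring.
by rewrite H mulr0.
Qed.


Lemma dist_line_eq P u Z : u != (0,0) ->
  dist_line (line_through P u) Z = Num.sqrt (cr P u Z ^+ 2 / (u.1 ^+ 2 + u.2 ^+ 2)).
Proof.
move=> Hu; have Hn := nz_norm Hu.
have key : forall t, cr P u Z ^+ 2 / (u.1 ^+ 2 + u.2 ^+ 2) <=
   (Z.1 - (padd P (pscale t u)).1) ^+ 2 + (Z.2 - (padd P (pscale t u)).2) ^+ 2.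
  move=> t; rewrite ler_pdivrMr //.
  have -> : ((Z.1 - (padd P (pscale t u)).1) ^+ 2 + (Z.2 - (padd P (pscale t u)).2) ^+ 2) * (u.1 ^+ 2 + u.2 ^+ 2)
     = cr P u Z ^+ 2 + ((Z.1 - P.1 - t * u.1) * u.1 + (Z.2 - P.2 - t * u.2) * u.2) ^+ 2.
    rewrite /cr /padd /pscale /=; ring.
  by rewrite lerDl sqr_ge0.
set t0 := ((Z.1 - P.1) * u.1 + (Z.2 - P.2) * u.2) / (u.1 ^+ 2 + u.2 ^+ 2).
have Hn0 : u.1 ^+ 2 + u.2 ^+ 2 != 0 by rewrite gt_eqF.
have eq0 : cr P u Z ^+ 2 / (u.1 ^+ 2 + u.2 ^+ 2) =
   (Z.1 - (padd P (pscale t0 u)).1) ^+ 2 + (Z.2 - (padd P (pscale t0 u)).2) ^+ 2.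
  rewrite /t0 /cr /padd /pscale /=; field => //.
rewrite /dist_line; apply/le_anti/andP; split.
  apply: ge_inf.
    exists 0 => _ [W _ <-]; exact: sqrtr_ge0.
  exists (padd P (pscale t0 u)); first by exists t0.
  by rewrite /dist eq0.
apply: lb_le_inf.
  by exists (dist Z P), P => //; exists 0; rewrite /padd /pscale /= !mul0r !addr0; case: (P).
move=> _ [W [t ->] <-]; rewrite /dist ler_sqrt; last first.
  by rewrite addr_ge0 // sqr_ge0.
exact: key.
Qed.


Lemma cr_comb3 P u A B C a b c : a + b + c = 1 ->
  cr P u (padd (padd (pscale a A) (pscale b B)) (pscale c C)) =
  a * cr P u A + b * cr P u B + c * cr P u C.
Proof.
move=> H; have -> : a = 1 - b - c by rewrite -H; ring.
rewrite /cr /padd /pscale /=; ring.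
Qed.

Lemma cr_seg P u A B t :
  cr P u (padd (pscale (1 - t) A) (pscale t B)) = (1 - t) * cr P u A + t * cr P u B.
Proof. rewrite /cr /padd /pscale /=; ring. Qed.

Lemma cr_dir P u A B t :
  cr P u (padd A (pscale t (B.1 - A.1, B.2 - A.2))) = (1 - t) * cr P u A + t * cr P u B.
Proof. rewrite /cr /padd /pscale /=; ring. Qed.

Lemma cr_refl P u A B Z :
  cr P u (reflect_pt (midpoint A B) Z) = cr P u A + cr P u B - cr P u Z.
Proof.
rewrite /cr /reflect_pt /midpoint /=.
have h : forall x y : R, 2 * ((x + y) / 2) = x + y.
  by move=> x y; rewrite mulrC divfK // pnatr_eq0.
rewrite !h; ring.
Qed.

Lemma cr_inj P u Q v Z W : u.1 * v.2 - u.2 * v.1 != 0 ->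
  cr P u Z = cr P u W -> cr Q v Z = cr Q v W -> Z = W.
Proof.
case: Z W u v P Q => z1 z2 [w1 w2] [u1 u2] [v1 v2] [p1 p2] [q1 q2]; rewrite /cr /= => HD H1 H2.
have E1 : (z1 - w1) * u2 - (z2 - w2) * u1 = 0.
  have -> : (z1 - w1) * u2 - (z2 - w2) * u1 = ((z1-p1)*u2 - (z2-p2)*u1) - ((w1-p1)*u2 - (w2-p2)*u1) by ring.
  by rewrite H1 subrr.
have E2 : (z1 - w1) * v2 - (z2 - w2) * v1 = 0.
  have -> : (z1 - w1) * v2 - (z2 - w2) * v1 = ((z1-q1)*v2 - (z2-q2)*v1) - ((w1-q1)*v2 - (w2-q2)*v1) by ring.
  by rewrite H2 subrr.
have F1 : (u1 * v2 - u2 * v1) * (z1 - w1) = 0.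
  have -> : (u1 * v2 - u2 * v1) * (z1 - w1) = u1 * ((z1 - w1) * v2 - (z2 - w2) * v1) - v1 * ((z1 - w1) * u2 - (z2 - w2) * u1) by ring.
  by rewrite E1 E2 !mulr0 subrr.
have F2 : (u1 * v2 - u2 * v1) * (z2 - w2) = 0.
  have -> : (u1 * v2 - u2 * v1) * (z2 - w2) = u2 * ((z1 - w1) * v2 - (z2 - w2) * v1) - v2 * ((z1 - w1) * u2 - (z2 - w2) * u1) by ring.
  by rewrite E1 E2 !mulr0 subrr.
move/eqP: F1; rewrite mulf_eq0 (negbTE HD) /= subr_eq0 => /eqP ->.
by move/eqP: F2; rewrite mulf_eq0 (negbTE HD) /= subr_eq0 => /eqP ->.
Qed.

Lemma divE (x y : R) : x / y = (x * y) / (y ^+ 2).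
Proof.
case: (eqVneq y 0) => [->|Hy]; first by rewrite invr0 !mulr0 expr0n /= invr0 mulr0.
by field.
Qed.

Lemma div_ge0' (x y : R) : 0 <= x * y -> 0 <= x / y.
Proof. by move=> H; rewrite divE divr_ge0 // sqr_ge0. Qed.

Lemma signs (s s' : R) : 0 < s * s' -> (s ^+ 2 <= s' ^+ 2 <-> 0 <= (s' - s) * s).
Proof. move=> H; split => H1; nra. Qed.


Lemma tri_iff P u Q v O Y Y' Z p q p' q' : u.1 * v.2 - u.2 * v.1 != 0 ->
  cr P u O = 0 -> cr Q v O = 0 -> cr P u Y = 0 -> cr Q v Y = p + p' ->
  cr Q v Y' = 0 -> cr P u Y' = q + q' -> cr Q v Z = p -> cr P u Z = q ->
  0 < p * p' -> 0 < q * q' ->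
  (triangle O Y Y' Z <-> (p * q) ^+ 2 <= (p' * q') ^+ 2).
Proof.
move=> HD O1 O2 Y1 Y2 Y'1 Y'2 Z1 Z2 Hp Hq.
have Hpp : 0 < p * (p + p') by nra.
have Hqq : 0 < q * (q + q') by nra.
have Hp0 : p + p' != 0 by apply/eqP => E; move: Hpp; rewrite E mulr0 ltxx.
have Hq0 : q + q' != 0 by apply/eqP => E; move: Hqq; rewrite E mulr0 ltxx.
have Hs : 0 < (p * q) * (p' * q').
  have -> : (p * q) * (p' * q') = (p * p') * (q * q') by ring.
  exact: mulr_gt0.
have HE : 0 < ((p + p') * (q + q')) * (p * q).
  have -> : ((p + p') * (q + q')) * (p * q) = (p * (p + p')) * (q * (q + q')) by ring.
  exact: mulr_gt0.
rewrite signs // /triangle /=; split.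
  case=> a [b [c [a0 b0 c0 abc EZ]]].
  have := Z1; have := Z2; rewrite EZ !cr_comb3 // O1 O2 Y1 Y2 Y'1 Y'2 !mulr0 !add0r addr0.
  move=> Hc Hb.
  have Ha : a * ((p + p') * (q + q')) = p' * q' - p * q.
    have -> : a = 1 - b - c by rewrite -abc; ring.
    have -> : (1 - b - c) * ((p + p') * (q + q')) = (p + p') * (q + q') - (b * (p + p')) * (q + q') - (c * (q + q')) * (p + p') by ring.
    rewrite Hb Hc; ring.
  rewrite -Ha; nra.
move=> H.
have HE' : 0 <= (p' * q' - p * q) * ((p + p') * (q + q')).
  rewrite -(pmulr_lge0 _ HE).
  have -> : (p' * q' - p * q) * ((p + p') * (q + q')) * ((p + p') * (q + q') * (p * q)) = ((p' * q' - p * q) * (p * q)) * ((p + p') * (q + q')) ^+ 2 by ring.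
  by rewrite mulr_ge0 // sqr_ge0.
exists ((p' * q' - p * q) / ((p + p') * (q + q'))), (p / (p + p')), (q / (q + q')).
have abc : (p' * q' - p * q) / ((p + p') * (q + q')) + p / (p + p') + q / (q + q') = 1.
  by field; rewrite Hp0 Hq0.
split => //.
- exact: div_ge0'.
- by apply: div_ge0'; nra.
- by apply: div_ge0'; nra.
apply: (cr_inj (P:=P) (Q:=Q) HD).
  rewrite cr_comb3 // O1 Y1 Y'2 Z2 !mulr0 !add0r.
  by field.
rewrite cr_comb3 // O2 Y2 Y'1 Z1 !mulr0 add0r addr0.
by field.
Qed.


Lemma side_pos P u X X' : u != (0,0) -> same_side (line_through P u) X X' ->
  0 < cr P u X * cr P u X'.
Proof.
move=> Hu [nX [nX' Hseg]].
have q0 : cr P u X != 0 by apply/eqP => E; apply: nX; apply/on_line.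
have q0' : cr P u X' != 0 by apply/eqP => E; apply: nX'; apply/on_line.
set q := cr P u X in q0 *; set q' := cr P u X' in q0' *.
rewrite ltNge; apply/negP => Hle.
have Hneg : q * q' < 0 by rewrite lt_neqAle Hle andbT mulf_neq0.
have Hd : 0 < q ^+ 2 - q * q' by have := sqr_ge0 q; lra.
set t := q ^+ 2 / (q ^+ 2 - q * q').
have : (segment X X' `&` line_through P u) (padd (pscale (1 - t) X) (pscale t X')).
  split.
    exists t; split => //; apply/andP; split.
      by rewrite divr_ge0 // ?sqr_ge0 // ltW.
    by rewrite ler_pdivrMr // mul1r; lra.
  apply/on_line => //; rewrite cr_seg -/q -/q' /t.
  by field; rewrite gt_eqF.
by rewrite Hseg.
Qed.

Lemma disprod_eq P u Q v Z : u != (0,0) -> v != (0,0) ->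
  disprod (line_through P u) (line_through Q v) Z =
  Num.sqrt ((cr P u Z * cr Q v Z) ^+ 2 / ((u.1 ^+ 2 + u.2 ^+ 2) * (v.1 ^+ 2 + v.2 ^+ 2))).
Proof.
move=> Hu Hv; rewrite /disprod !dist_line_eq // -sqrtrM; last first.
  by rewrite divr_ge0 // ?sqr_ge0 // ltW // nz_norm.
congr Num.sqrt; rewrite exprMn invfM; ring.
Qed.


Lemma cr_shift P u A t w : cr P u (padd A (pscale t w)) = cr P u A + t * (w.1 * u.2 - w.2 * u.1).
Proof. rewrite /cr /padd /pscale /=; ring. Qed.

Lemma sq_eq (s s' : R) : 0 < s * s' -> s ^+ 2 = s' ^+ 2 -> s = s'.
Proof.
move=> H E.
have : (s - s') * (s + s') = 0 by rewrite -subr_sqr E subrr.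
move/eqP; rewrite mulf_eq0 => /orP [|H2]; first by rewrite subr_eq0 => /eqP.
exfalso; move/eqP: H2 => H2; have E2 : s' = - s by lra.
 move: H; rewrite E2; nra.
Qed.

End H.

Theorem lemma8 (R : realType) (l l' : set (pt R)) (O X X' Y Y' : pt R) :
  is_line l -> is_line l' -> l `&` l' = [set O] ->
  same_quadrant l l' X X' ->
  l Y -> reflect_set (midpoint X X') l' Y ->
  l' Y' -> reflect_set (midpoint X X') l Y' ->
  [/\ (disprod l l' X < disprod l l' X' ->
         triangle O Y Y' X /\ ~ triangle O Y Y' X'),
      (disprod l l' X > disprod l l' X' ->
         ~ triangle O Y Y' X /\ triangle O Y Y' X') &
      (disprod l l' X = disprod l l' X' -> collinear4 X Y X' Y')].
Proof.
move=> [P [u [Hu ->]]] [Q [v [Hv ->]]] HI [Hs1 Hs2] lY [Z1 lZ1 EY] l'Y' [Z2 lZ2 EY'].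
have [OP OQ] : (line_through P u `&` line_through Q v) O by rewrite HI.
move/(on_line _ _ Hu): OP => OP; move/(on_line _ _ Hv): OQ => OQ.
move/(on_line _ _ Hu): lY => Y1; move/(on_line _ _ Hv): l'Y' => Y'1.
move/(on_line _ _ Hv): lZ1 => HZ1; move/(on_line _ _ Hu): lZ2 => HZ2.
have Hp := side_pos Hv Hs2; have Hq := side_pos Hu Hs1.
have HD : u.1 * v.2 - u.2 * v.1 != 0.
  apply/eqP => HD0.
  have : (line_through P u `&` line_through Q v) (padd O (pscale 1 u)).
    split; apply/on_line => //; rewrite cr_shift ?OP ?OQ.
      by rewrite add0r mul1r; ring.
    by rewrite HD0 mulr0 addr0.
  rewrite HI => E; move: Hu E; case: (O) (u) => o1 o2 [u1 u2] /= Hu [E1 E2].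
  have h1 : u1 = 0 by lra.
  have h2 : u2 = 0 by lra.
  by move: Hu; rewrite h1 h2 eqxx.
set p := cr Q v X in Hp *; set p' := cr Q v X' in Hp *.
set q := cr P u X in Hq *; set q' := cr P u X' in Hq *.
have Y2 : cr Q v Y = p + p' by rewrite -EY cr_refl HZ1 subr0.
have Y'2 : cr P u Y' = q + q' by rewrite -EY' cr_refl HZ2 subr0.
have triX := tri_iff HD OP OQ Y1 Y2 Y'1 Y'2 (erefl p) (erefl q) Hp Hq.
have triX' : triangle O Y Y' X' <-> (p' * q') ^+ 2 <= (p * q) ^+ 2.
  apply: (tri_iff HD OP OQ Y1 _ Y'1 _ (erefl p') (erefl q')).
  - by rewrite Y2 addrC.
  - by rewrite Y'2 addrC.
  - by rewrite mulrC.
  - by rewrite mulrC.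
have Hs : 0 < (p * q) * (p' * q').
  have -> : (p * q) * (p' * q') = (p * p') * (q * q') by ring.
  exact: mulr_gt0.
have sq0 : 0 < (q' * p') ^+ 2.
  rewrite exprn_even_gt0 //; apply/eqP => E; move: Hs; rewrite [p' * q']mulrC E mulr0 ltxx //.
have sq0' : 0 < (q * p) ^+ 2.
  rewrite exprn_even_gt0 //; apply/eqP => E; move: Hs; rewrite [p * q]mulrC E mul0r ltxx //.
have HK : 0 < ((u.1 ^+ 2 + u.2 ^+ 2) * (v.1 ^+ 2 + v.2 ^+ 2)) by rewrite mulr_gt0 // nz_norm.
rewrite !disprod_eq // -/p -/q -/p' -/q'.
split.
- rewrite ltr_sqrt ?divr_gt0 // ltr_pM2r ?invr_gt0 // [q * p]mulrC [q' * p']mulrC => H.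
  split; first by apply/triX; exact: ltW.
  by move/triX' => H'; move: H; rewrite ltNge H'.
- rewrite ltr_sqrt ?divr_gt0 // ltr_pM2r ?invr_gt0 // [q * p]mulrC [q' * p']mulrC => H.
  split; last by apply/triX'; exact: ltW.
  by move/triX => H'; move: H; rewrite ltNge H'.
move/eqP; rewrite eqr_sqrt ?divr_ge0 ?ltW // => /eqP /(mulIf _).
rewrite invr_eq0 gt_eqF // => /(_ isT); rewrite [q * p]mulrC [q' * p']mulrC => /(sq_eq Hs) Hs2e.
have Hpp : 0 < p * (p + p') by nra.
have Hqq : 0 < q * (q + q') by nra.
have Hp0 : p + p' != 0 by apply/eqP => E; move: Hpp; rewrite E mulr0 ltxx.
have Hq0 : q + q' != 0 by apply/eqP => E; move: Hqq; rewrite E mulr0 ltxx.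
have online : forall t, cr P u (padd Y (pscale t (Y'.1 - Y.1, Y'.2 - Y.2))) = t * (q + q') /\
                        cr Q v (padd Y (pscale t (Y'.1 - Y.1, Y'.2 - Y.2))) = (1 - t) * (p + p').
  by move=> t; rewrite !cr_dir Y1 Y2 Y'1 Y'2 !mulr0 add0r addr0.
exists (line_through Y (Y'.1 - Y.1, Y'.2 - Y.2)); split.
  exists Y, (Y'.1 - Y.1, Y'.2 - Y.2); split => //.
  apply/eqP => Hd; have [o1 o2] := online 1.
  move: o2; rewrite Hd /padd /pscale /= !mulr0 !addr0 subrr mul0r.
  have -> : (Y.1, Y.2) = Y by case: (Y).
  by rewrite Y2 => E; move: Hp0; rewrite E eqxx.
split.
  exists (q / (q + q')); have [o1 o2] := online (q / (q + q')).
  apply: (cr_inj (P:=P) (Q:=Q) HD).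
    by rewrite o1 -/q divfK.
  rewrite o2 -/p; apply: (mulIf Hq0).
  have -> : (1 - q / (q + q')) * (p + p') * (q + q') = q' * (p + p') by field.
  nra.
split.
  exists 0; rewrite /padd /pscale /= !mul0r !addr0; by case: (Y).
split.
  exists (q' / (q + q')); have [o1 o2] := online (q' / (q + q')).
  apply: (cr_inj (P:=P) (Q:=Q) HD).
    by rewrite o1 -/q' divfK.
  rewrite o2 -/p'; apply: (mulIf Hq0).
  have -> : (1 - q' / (q + q')) * (p + p') * (q + q') = q * (p + p') by field.
  nra.
exists 1; rewrite /padd /pscale /= !mul1r; case: (Y) (Y') => a b [c d] /=; congr pair; ring.
Qed.
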